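(* Let $f_1,f_2$ be strongly hyperbolic functions. Given $C\in\mathcal{C}^-(f_1,f_2)$ and two points $p\in C$, $q\notin C$ with $q$ not parallel to $p$, there exists $D\in\mathcal{C}^-(f_1,f_2)$ with $p,q\in D$ and $C\cap D=\{p\}$.
   Context: Identify $\mathbb{S}^1$ with $\mathbb{R}\cup\{\infty\}$, $\mathcal{P}=\mathbb{S}^1\times\mathbb{S}^1$, $\mathbb{R}^+=(0,\infty)$. Two points of $\mathcal{P}$ are parallel if they have the same first coordinate or the same second coordinate. A function $f:\mathbb{R}^+\to\mathbb{R}^+$ is strongly hyperbolic if: (1) $\lim_{x\to0+}f(x)=+\infty$, $\lim_{x\to+\infty}f(x)=0$; (2) $f$ strictly convex; (3) $\lim_{x\to+\infty}f(x+b)/f(x)=1$ for each $b\in\mathbb{R}$; (4) $f$ differentiable; (5) $\ln|f'|$ strictly convex. For $a>0$, $b,c\in\mathbb{R}$: $f_{a,b,c}(x)=af_1(x+b)+c$ for $x>-b$, $f_{a,b,c}(x)=-af_2(-x-b)+c$ for $x<-b$; $\overline{f_{a,b,c}}=\{(x,f_{a,b,c}(x)):x\ne-b\}\cup\{(-b,\infty),(\infty,c)\}$; $\overline{l_{s,t}}=\{(x,sx+t):x\in\mathbb{R}\}\cup\{(\infty,\infty)\}$; $\mathcal{C}^-(f_1,f_2)=\{\overline{f_{a,b,c}}:a>0,b,c\in\mathbb{R}\}\cup\{\overline{l_{s,t}}:s<0,t\in\mathbb{R}\}$. *)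

(* Defs.v *)
From Stdlib Require Import Reals.
From Coquelicot Require Import Coquelicot.
Open Scope R_scope.

(* S^1 = R ∪ {∞}: [Some x] is the real x, [None] is ∞. *)
Definition S1 := option R.
Definition P := (S1 * S1)%type.

Definition parallel (p q : P) : Prop := fst p = fst q \/ snd p = snd q.

Definition strictly_convex_pos (g : R -> R) : Prop :=
  forall x y t, 0 < x -> 0 < y -> x <> y -> 0 < t < 1 ->
    g (t * x + (1 - t) * y) < t * g x + (1 - t) * g y.

(* f : R^+ -> R^+ is modelled as f : R -> R; only its values on (0,+oo) matter. *)
Definition strongly_hyperbolic (f : R -> R) : Prop :=
  (forall x, 0 < x -> 0 < f x) /\
  (* (1) *)
  filterlim f (at_right 0) (Rbar_locally p_infty) /\
  filterlim f (Rbar_locally p_infty) (locally 0) /\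
  (* (2) *)
  strictly_convex_pos f /\
  (* (3) *)
  (forall b : R, filterlim (fun x => f (x + b) / f x) (Rbar_locally p_infty) (locally 1)) /\
  (* (4) *)
  (forall x, 0 < x -> ex_derive f x) /\
  (* (5) *)
  strictly_convex_pos (fun x => ln (Rabs (Derive f x))).

(* f_{a,b,c} (its value at x = -b is irrelevant) *)
Definition fabc (f1 f2 : R -> R) (a b c : R) (x : R) : R :=
  if Rlt_dec (- b) x then a * f1 (x + b) + c else - a * f2 (- x - b) + c.

Definition fbar (f1 f2 : R -> R) (a b c : R) (z : P) : Prop :=
  (exists x, x <> - b /\ z = (Some x, Some (fabc f1 f2 a b c x))) \/
  z = (Some (- b), None) \/ z = (None, Some c).

Definition lbar (s t : R) (z : P) : Prop :=
  (exists x, z = (Some x, Some (s * x + t))) \/ z = (None, None).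

Definition in_Cminus (f1 f2 : R -> R) (C : P -> Prop) : Prop :=
  (exists a b c, 0 < a /\ C = fbar f1 f2 a b c) \/
  (exists s t, s < 0 /\ C = lbar s t).

(* Main.v *)
Require Import Defs.
From Stdlib Require Import Reals Lra Ranalysis5 Classical.
From Coquelicot Require Import Coquelicot.
Open Scope R_scope.

Lemma cont_unpack (g : R -> R) (x : R) : continuity_pt g x ->
  forall eps, 0 < eps -> exists alp, 0 < alp /\ forall y, Rabs (y - x) < alp -> Rabs (g y - g x) < eps.
Proof.
  intros H eps He. destruct (H eps He) as [alp [Ha Hb]].
  exists alp; split; auto. intros y Hy.
  destruct (Req_dec y x) as [->|Hne]. rewrite Rminus_diag, Rabs_R0; auto.
  apply (Hb y). split. unfold D_x, no_cond. split; auto. exact Hy.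
Qed.

Lemma conv_key (g : R -> R) : strictly_convex_pos g ->
  forall x y z, 0 < x -> x < y -> y < z -> (z - x) * g y < (z - y) * g x + (y - x) * g z.
Proof.
  intros Hg x y z Hx Hxy Hyz.
  set (t := (z - y) / (z - x)).
  assert (Ht : 0 < t < 1).
  { unfold t; split. apply Rdiv_lt_0_compat; lra.
    apply (Rmult_lt_reg_r (z - x)). lra. unfold Rdiv; rewrite Rmult_assoc, Rinv_l; lra. }
  assert (Hy : t * x + (1 - t) * z = y).
  { unfold t; field; lra. }
  pose proof (Hg x z t Hx ltac:(lra) ltac:(lra) Ht) as H. rewrite Hy in H.
  assert (E1 : (z - x) * (t * g x + (1 - t) * g z) = (z - y) * g x + (y - x) * g z).
  { unfold t; field; lra. }
  rewrite <- E1. apply Rmult_lt_compat_l; lra.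
Qed.

Lemma conv_mid (g : R -> R) : strictly_convex_pos g ->
  forall x z, 0 < x -> 0 < z -> x <> z -> g ((x + z) / 2) < (g x + g z) / 2.
Proof.
  intros Hg x z Hx Hz Hxz.
  pose proof (Hg x z (1/2) Hx Hz Hxz ltac:(lra)) as H.
  replace (1 / 2 * x + (1 - 1 / 2) * z) with ((x + z) / 2) in H by field. lra.
Qed.

Lemma conv_shift (h : R -> R) : strictly_convex_pos h ->
  forall s t d, 0 < s -> s < t -> 0 < d -> h (s + d) + h t < h s + h (t + d).
Proof.
  intros Hh s t d Hs Hst Hd.
  pose proof (conv_key h Hh s (s + d) (t + d) Hs ltac:(lra) ltac:(lra)) as H1.
  pose proof (conv_key h Hh s t (t + d) Hs Hst ltac:(lra)) as H2.
  assert (H3 : (t + d - s) * (h (s + d) + h t) < (t + d - s) * (h s + h (t + d))).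
  { ring_simplify. ring_simplify in H1. ring_simplify in H2. lra. }
  apply Rmult_lt_reg_l in H3; lra.
Qed.


Lemma SH_pos f : strongly_hyperbolic f -> forall x, 0 < x -> 0 < f x.
Proof. intros H; apply H. Qed.

Lemma SH_conv f : strongly_hyperbolic f -> strictly_convex_pos f.
Proof. intros H; apply H. Qed.

Lemma SH_hconv f : strongly_hyperbolic f -> strictly_convex_pos (fun x => ln (Rabs (Derive f x))).
Proof. intros H; apply H. Qed.

Lemma SH_der f : strongly_hyperbolic f -> forall x, 0 < x -> derivable_pt_lim f x (Derive f x).
Proof.
  intros H x Hx. apply is_derive_Reals. apply Derive_correct. apply H; auto.
Qed.

Lemma SH_ex_der f : strongly_hyperbolic f -> forall x, 0 < x -> ex_derive f x.
Proof. intros H x Hx. apply H; auto. Qed.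

Lemma SH_cont f : strongly_hyperbolic f -> forall x, 0 < x -> continuity_pt f x.
Proof.
  intros H x Hx. apply derivable_continuous_pt. exists (Derive f x). apply SH_der; auto.
Qed.

Lemma SH_lim0 f : strongly_hyperbolic f -> forall K, exists d, 0 < d /\ forall x, 0 < x < d -> K < f x.
Proof.
  intros H K. destruct H as [_ [H _]].
  assert (HP : Rbar_locally p_infty (fun y => K < y)) by (exists K; auto).
  specialize (H _ HP). destruct H as [eps Heps].
  exists eps; split. apply cond_pos.
  intros x [Hx1 Hx2]. apply Heps; auto.
  change (Rabs (x - 0) < eps). rewrite Rminus_0_r, Rabs_pos_eq; lra.
Qed.

Lemma SH_liminf f : strongly_hyperbolic f -> forall eps, 0 < eps -> exists M, 0 < M /\ forall x, M < x -> f x < eps.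
Proof.
  intros H eps He. destruct H as [_ [_ [H _]]].
  apply filterlim_locally with (eps := mkposreal eps He) in H.
  destruct H as [M HM]. exists (Rmax M 1). split. apply Rlt_le_trans with 1; [lra| apply Rmax_r].
  intros x Hx. specialize (HM x ltac:(apply Rle_lt_trans with (2 := Hx); apply Rmax_l)).
  change (Rabs (f x - 0) < eps) in HM. rewrite Rminus_0_r in HM.
  apply Rabs_lt_between in HM. lra.
Qed.

Lemma SH_ratio f : strongly_hyperbolic f -> forall b eps, 0 < eps ->
  exists M, forall x, M < x -> Rabs (f (x + b) / f x - 1) < eps.
Proof.
  intros H b eps He. destruct H as [_ [_ [_ [_ [H _]]]]].
  specialize (H b). apply filterlim_locally with (eps := mkposreal eps He) in H.
  destruct H as [M HM]. exists M. intros x Hx. exact (HM x Hx).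
Qed.

Lemma tangent_weak f : strongly_hyperbolic f -> forall x0 t, 0 < x0 -> 0 < t ->
  f t - f x0 >= Derive f x0 * (t - x0).
Proof.
  intros H x0 t Hx0 Ht. set (d := Derive f x0).
  pose proof (SH_der f H x0 Hx0) as Hd. fold d in Hd.
  pose proof (conv_key f (SH_conv f H)) as K.
  destruct (Rtotal_order t x0) as [Hlt|[Heq|Hgt]].
  - apply Rnot_lt_ge. intro Hc.
    set (s' := (f t - f x0) / (x0 - t)).
    assert (Hs' : s' < - d).
    { unfold s'. apply (Rmult_lt_reg_r (x0 - t)). lra.
      unfold Rdiv. rewrite Rmult_assoc, Rinv_l by lra. lra. }
    destruct (Hd (- s' - d) ltac:(lra)) as [del Hdel].
    set (h := Rmin (del / 2) ((x0 - t) / 2)).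
    assert (Hh : 0 < h) by (unfold h; apply Rmin_glb_lt; [apply Rdiv_lt_0_compat; [apply cond_pos|lra] | lra]).
    assert (Hh2 : h < x0 - t) by (unfold h; eapply Rle_lt_trans; [apply Rmin_r|lra]).
    assert (Hh3 : h < del) by (unfold h; eapply Rle_lt_trans; [apply Rmin_l| pose proof (cond_pos del); lra]).
    specialize (Hdel (- h) ltac:(lra) ltac:(rewrite Rabs_Ropp, Rabs_pos_eq; lra)).
    pose proof (K t (x0 - h) x0 Ht ltac:(lra) ltac:(lra)) as K1.
    replace (x0 + - h) with (x0 - h) in Hdel by ring.
    assert (E : (f (x0 - h) - f x0) / - h > - s').
    { apply Rmult_gt_reg_l with h. lra.
      replace (h * ((f (x0 - h) - f x0) / - h)) with (f x0 - f (x0 - h)) by (field; lra).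
      unfold s'. apply Rmult_lt_reg_r with (x0 - t). lra.
      replace (h * - ((f t - f x0) / (x0 - t)) * (x0 - t)) with (- h * (f t - f x0)) by (field; lra).
      replace (x0 - h - t) with ((x0 - t) - h) in K1 by ring.
      nra. }
    apply Rabs_lt_between in Hdel. lra.
  - subst. lra.
  - apply Rnot_lt_ge. intro Hc.
    set (s := (f t - f x0) / (t - x0)).
    assert (Hs : s < d).
    { unfold s. apply (Rmult_lt_reg_r (t - x0)). lra.
      unfold Rdiv. rewrite Rmult_assoc, Rinv_l by lra. lra. }
    destruct (Hd (d - s) ltac:(lra)) as [del Hdel].
    set (h := Rmin (del / 2) ((t - x0) / 2)).
    assert (Hh : 0 < h) by (unfold h; apply Rmin_glb_lt; [apply Rdiv_lt_0_compat; [apply cond_pos|lra] | lra]).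
    assert (Hh2 : h < t - x0) by (unfold h; eapply Rle_lt_trans; [apply Rmin_r|lra]).
    assert (Hh3 : h < del) by (unfold h; eapply Rle_lt_trans; [apply Rmin_l| pose proof (cond_pos del); lra]).
    specialize (Hdel h ltac:(lra) ltac:(rewrite Rabs_pos_eq; lra)).
    pose proof (K x0 (x0 + h) t Hx0 ltac:(lra) ltac:(lra)) as K1.
    assert (E : (f (x0 + h) - f x0) / h < s).
    { apply Rmult_lt_reg_l with h. lra.
      replace (h * ((f (x0 + h) - f x0) / h)) with (f (x0 + h) - f x0) by (field; lra).
      unfold s. apply Rmult_lt_reg_r with (t - x0). lra.
      replace (h * ((f t - f x0) / (t - x0)) * (t - x0)) with (h * (f t - f x0)) by (field; lra).
      replace (t - (x0 + h)) with ((t - x0) - h) in K1 by ring.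
      replace (x0 + h - x0) with h in K1 by ring.
      nra. }
    apply Rabs_lt_between in Hdel. lra.
Qed.

Lemma tangent_strict f : strongly_hyperbolic f -> forall x0 t, 0 < x0 -> 0 < t -> t <> x0 ->
  f t > f x0 + Derive f x0 * (t - x0).
Proof.
  intros H x0 t Hx0 Ht Hne.
  pose proof (conv_mid f (SH_conv f H) t x0 Ht Hx0 Hne) as M.
  pose proof (tangent_weak f H x0 ((t + x0) / 2) Hx0 ltac:(lra)) as W.
  replace ((t + x0) / 2 - x0) with ((t - x0) / 2) in W by field. lra.
Qed.

Lemma cp_id x : continuity_pt (fun y => y) x.
Proof. apply derivable_continuous_pt. apply derivable_pt_id. Qed.
Lemma cp_const c x : continuity_pt (fun _ => c) x.
Proof. apply continuity_pt_const. intros a b; reflexivity. Qed.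
Lemma cp_plus g h x : continuity_pt g x -> continuity_pt h x -> continuity_pt (fun y => g y + h y) x.
Proof. intros; exact (continuity_pt_plus g h x H H0). Qed.
Lemma cp_minus g h x : continuity_pt g x -> continuity_pt h x -> continuity_pt (fun y => g y - h y) x.
Proof. intros; exact (continuity_pt_minus g h x H H0). Qed.
Lemma cp_mult g h x : continuity_pt g x -> continuity_pt h x -> continuity_pt (fun y => g y * h y) x.
Proof. intros; exact (continuity_pt_mult g h x H H0). Qed.
Lemma cp_div g h x : continuity_pt g x -> continuity_pt h x -> h x <> 0 -> continuity_pt (fun y => g y / h y) x.
Proof. intros; exact (continuity_pt_div g h x H H0 H1). Qed.
Lemma cp_comp g h x : continuity_pt h x -> continuity_pt g (h x) -> continuity_pt (fun y => g (h y)) x.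
Proof. intros; exact (continuity_pt_comp h g x H H0). Qed.

Lemma SH_decr f : strongly_hyperbolic f -> forall x y, 0 < x -> x < y -> f y < f x.
Proof.
  intros H x y Hx Hxy. apply Rnot_le_lt. intro Hc.
  assert (Hz : forall z, y < z -> f y < f z).
  { intros z Hz. pose proof (conv_key f (SH_conv f H) x y z Hx Hxy Hz). nra. }
  pose proof (SH_pos f H y ltac:(lra)) as Hy.
  destruct (SH_liminf f H (f y) Hy) as [M [HM HM2]].
  specialize (Hz (Rmax M y + 1) ltac:(pose proof (Rmax_r M y); lra)).
  specialize (HM2 (Rmax M y + 1) ltac:(pose proof (Rmax_l M y); lra)). lra.
Qed.

Lemma SH_dneg f : strongly_hyperbolic f -> forall x, 0 < x -> Derive f x < 0.
Proof.
  intros H x Hx. pose proof (tangent_strict f H x (x + 1) Hx ltac:(lra) ltac:(lra)).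
  pose proof (SH_decr f H x (x + 1) Hx ltac:(lra)). replace (x + 1 - x) with 1 in H0 by ring. lra.
Qed.

Lemma SH_dincr f : strongly_hyperbolic f -> forall x y, 0 < x -> x < y -> Derive f x < Derive f y.
Proof.
  intros H x y Hx Hxy.
  pose proof (tangent_strict f H x y Hx ltac:(lra) ltac:(lra)).
  pose proof (tangent_strict f H y x ltac:(lra) Hx ltac:(lra)).
  assert ((Derive f y - Derive f x) * (y - x) > 0) by nra.
  apply Rmult_gt_reg_r with (y - x); lra.
Qed.

Lemma SH_dshift f : strongly_hyperbolic f -> forall s t d, 0 < s -> s < t -> 0 < d ->
  Derive f (s + d) * Derive f t < Derive f s * Derive f (t + d).
Proof.
  intros H s t d Hs Hst Hd.
  pose proof (conv_shift _ (SH_hconv f H) s t d Hs Hst Hd) as K. simpl in K.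
  pose proof (SH_dneg f H s Hs). pose proof (SH_dneg f H t ltac:(lra)).
  pose proof (SH_dneg f H (s + d) ltac:(lra)). pose proof (SH_dneg f H (t + d) ltac:(lra)).
  rewrite <- !ln_mult in K by (apply Rabs_pos_lt; lra).
  apply ln_lt_inv in K; try (apply Rmult_lt_0_compat; apply Rabs_pos_lt; lra).
  rewrite !Rabs_left in K by lra. nra.
Qed.

Lemma SH_dcont f : strongly_hyperbolic f -> forall x, 0 < x -> continuity_pt (Derive f) x.
Proof.
  intros H x Hx eps He.
  pose proof (SH_der f H x Hx) as Hd.
  destruct (Hd (eps / 2) ltac:(lra)) as [del Hdel].
  set (h0 := Rmin (del / 2) (x / 2)).
  assert (Hh0 : 0 < h0) by (unfold h0; apply Rmin_glb_lt; [pose proof (cond_pos del); lra | lra]).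
  assert (Hh1 : h0 < del) by (unfold h0; eapply Rle_lt_trans; [apply Rmin_l| pose proof (cond_pos del); lra]).
  assert (Hh2 : h0 < x) by (unfold h0; eapply Rle_lt_trans; [apply Rmin_r| lra]).
  pose proof (Hdel h0 ltac:(lra) ltac:(rewrite Rabs_pos_eq; lra)) as Sp.
  pose proof (Hdel (- h0) ltac:(lra) ltac:(rewrite Rabs_Ropp, Rabs_pos_eq; lra)) as Sm.
  apply Rabs_lt_between in Sp. apply Rabs_lt_between in Sm.
  set (z := x + h0) in *. set (w := x + - h0) in *.
  assert (C1 : continuity_pt (fun y => (f z - f y) / (z - y)) x).
  { apply cp_div. apply cp_minus. apply cp_const. apply SH_cont; auto.
    apply cp_minus. apply cp_const. apply cp_id. unfold z; lra. }
  assert (C2 : continuity_pt (fun y => (f y - f w) / (y - w)) x).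
  { apply cp_div. apply cp_minus. apply SH_cont; auto. apply cp_const.
    apply cp_minus. apply cp_id. apply cp_const. unfold w; lra. }
  destruct (cont_unpack _ _ C1 (eps / 2) ltac:(lra)) as [a1 [Ha1 A1]].
  destruct (cont_unpack _ _ C2 (eps / 2) ltac:(lra)) as [a2 [Ha2 A2]].
  exists (Rmin h0 (Rmin a1 a2)). split.
  { apply Rmin_glb_lt; auto. apply Rmin_glb_lt; auto. }
  intros y [[_ Hyx] Hy]. simpl in Hy |- *. unfold R_dist in Hy |- *.
  pose proof (Rmin_l h0 (Rmin a1 a2)). pose proof (Rmin_r h0 (Rmin a1 a2)).
  pose proof (Rmin_l a1 a2). pose proof (Rmin_r a1 a2).
  apply Rabs_lt_between in Hy as Hy'.
  destruct (Rtotal_order y x) as [Hlt|[Heq|Hgt]].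
  -
    specialize (A2 y ltac:(lra)). apply Rabs_lt_between in A2.
    pose proof (tangent_strict f H y w ltac:(lra) ltac:(unfold w; lra) ltac:(unfold w; lra)) as T.
    assert (E1 : (f y - f w) / (y - w) < Derive f y).
    { apply Rmult_lt_reg_r with (y - w). unfold w; lra.
      unfold Rdiv; rewrite Rmult_assoc, Rinv_l by (unfold w; lra). lra. }
    replace (x - w) with h0 in A2 by (unfold w; ring).
    replace ((f w - f x) / - h0) with ((f x - f w) / h0) in Sm by (field; lra).
    pose proof (SH_dincr f H y x ltac:(lra) Hlt).
    rewrite Rabs_left by lra. lra.
  - subst. rewrite Rminus_diag, Rabs_R0; lra.
  - specialize (A1 y ltac:(lra)). apply Rabs_lt_between in A1.
    pose proof (tangent_strict f H y z ltac:(lra) ltac:(unfold z; lra) ltac:(unfold z; lra)) as T.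
    assert (E1 : Derive f y < (f z - f y) / (z - y)).
    { apply Rmult_lt_reg_r with (z - y). unfold z; lra.
      unfold Rdiv; rewrite Rmult_assoc, Rinv_l by (unfold z; lra). lra. }
    replace (z - x) with h0 in A1 by (unfold z; ring).
    pose proof (SH_dincr f H x y Hx Hgt).
    rewrite Rabs_pos_eq by lra. lra.
Qed.

Lemma mvt (k k' : R -> R) a b : a < b ->
  (forall c, a <= c <= b -> is_derive k c (k' c)) ->
  exists c, k b - k a = k' c * (b - a) /\ a < c < b.
Proof.
  intros Hab H. apply MVT_cor2; auto. intros c Hc. apply is_derive_Reals. apply H; auto.
Qed.

Lemma ivt_up (phi : R -> R) a b Y : a < b -> (forall x, a <= x <= b -> continuity_pt phi x) ->
  phi a < Y -> Y < phi b -> exists c, a <= c <= b /\ phi c = Y.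
Proof.
  intros Hab Hc H1 H2.
  destruct (IVT_interv (fun x => phi x - Y) a b) as [c [Hc1 Hc2]]; auto; try lra.
  intros x Hx. apply cp_minus. apply Hc; auto. apply cp_const.
  exists c; split; auto; lra.
Qed.

Lemma ivt_down (phi : R -> R) a b Y : a < b -> (forall x, a <= x <= b -> continuity_pt phi x) ->
  Y < phi a -> phi b < Y -> exists c, a <= c <= b /\ phi c = Y.
Proof.
  intros Hab Hc H1 H2.
  destruct (IVT_interv (fun x => Y - phi x) a b) as [c [Hc1 Hc2]]; auto; try lra.
  intros x Hx. apply cp_minus. apply cp_const. apply Hc; auto.
  exists c; split; auto; lra.
Qed.

Lemma SH_R1 f : strongly_hyperbolic f -> forall d e, 0 < d -> 0 < e ->
  exists M, 0 < M /\ forall u, M < u -> Derive f (u + d) < (1 - e) * Derive f u.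
Proof.
  intros H d e Hd He.
  destruct (Rlt_or_le e 1) as [He1|He1].
  2:{ exists 1. split. lra. intros u Hu. pose proof (SH_dneg f H (u + d) ltac:(lra)).
      pose proof (SH_dneg f H u ltac:(lra)). nra. }
  apply NNPP. intro Hn.
  set (L := 1 - e).
  assert (Hall : forall t, 0 < t -> Derive f (t + d) > L * Derive f t).
  { intros t Ht. apply NNPP. intro Ht2.
    apply Hn. exists t. split; auto. intros u Hu.
    apply Rnot_le_lt. intro Hu2.
    pose proof (SH_dshift f H t u d Ht Hu Hd) as S.
    pose proof (SH_dneg f H t Ht). pose proof (SH_dneg f H u ltac:(lra)).
    pose proof (SH_dneg f H (u + d) ltac:(lra)). pose proof (SH_dneg f H (t + d) ltac:(lra)).
    apply Ht2. fold L in Hu2.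
    assert (Derive f t * Derive f (u + d) <= L * Derive f t * Derive f u) by nra.
    assert (Derive f (t + d) * Derive f u < L * Derive f t * Derive f u) by lra.
    nra. }
  set (k := fun x => f (x + d) - L * f x).
  assert (kincr : forall a b, 0 < a -> a < b -> k a < k b).
  { intros a b Ha Hab.
    destruct (mvt k (fun x => Derive f (x + d) - L * Derive f x) a b Hab) as [c [Hc1 Hc2]].
    { intros c Hc. unfold k. auto_derive.
      split. apply SH_ex_der; auto; lra. split; auto. apply SH_ex_der; auto; lra.
      change (fun x : R => f x) with f. ring. }
    pose proof (Hall c ltac:(lra)). nra. }
  assert (kneg : forall t, 0 < t -> k t < 0).
  { intros t Ht. apply Rnot_le_lt. intro Hk.
    pose proof (kincr t (t + 1) Ht ltac:(lra)) as K1.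
    destruct (SH_liminf f H (k (t + 1)) ltac:(lra)) as [M [HM HM2]].
    set (s := Rmax M (t + 1) + 1).
    assert (Hs1 : M < s) by (unfold s; pose proof (Rmax_l M (t + 1)); lra).
    assert (Hs2 : t + 1 < s) by (unfold s; pose proof (Rmax_r M (t + 1)); lra).
    pose proof (kincr (t + 1) s ltac:(lra) Hs2).
    specialize (HM2 (s + d) ltac:(lra)).
    pose proof (SH_pos f H s ltac:(lra)).
    unfold k in *. unfold L in *. nra. }
  destruct (SH_ratio f H d e He) as [M HM].
  set (t := Rmax M 1 + 1).
  assert (Ht1 : M < t) by (unfold t; pose proof (Rmax_l M 1); lra).
  assert (Ht2 : 0 < t) by (unfold t; pose proof (Rmax_r M 1); lra).
  specialize (HM t Ht1). specialize (kneg t Ht2). unfold k in kneg.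
  pose proof (SH_pos f H t Ht2).
  apply Rabs_lt_between in HM.
  assert (f (t + d) / f t < L).
  { apply Rmult_lt_reg_r with (f t); auto. unfold Rdiv; rewrite Rmult_assoc, Rinv_l; lra. }
  unfold L in *. lra.
Qed.

Lemma SH_asym f : strongly_hyperbolic f -> forall X e, 0 < e ->
  exists M, 0 < M /\ forall u, M < u ->
    0 < u + X /\ Rabs (f (u + X) - f u - X * Derive f u) < e * (- Derive f u).
Proof.
  intros H X e He.
  destruct (Rtotal_order X 0) as [Hlt|[Heq|Hgt]].
  - set (e' := Rmin (1/2) (e / (2 * - X))).
    assert (He' : 0 < e') by (unfold e'; apply Rmin_glb_lt; [lra| apply Rdiv_lt_0_compat; lra]).
    assert (He'1 : e' <= 1/2) by apply Rmin_l.
    assert (He'2 : e' * (2 * - X) <= e).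
    { unfold e'. pose proof (Rmin_r (1/2) (e / (2 * - X))).
      apply Rle_trans with (e / (2 * - X) * (2 * - X)). apply Rmult_le_compat_r; lra.
      right; field; lra. }
    destruct (SH_R1 f H (- X) e' ltac:(lra) He') as [M [HM HM2]].
    exists (M - X). split. lra. intros u Hu. split. lra.
    specialize (HM2 (u + X) ltac:(lra)). replace (u + X + - X) with u in HM2 by ring.
    destruct (mvt f (Derive f) (u + X) u ltac:(lra)) as [c [Hc1 Hc2]].
    { intros c Hc. apply is_derive_Reals. apply SH_der; auto; lra. }
    pose proof (SH_dincr f H (u + X) c ltac:(lra) ltac:(lra)).
    pose proof (SH_dincr f H c u ltac:(lra) ltac:(lra)).
    pose proof (SH_dneg f H u ltac:(lra)). pose proof (SH_dneg f H (u + X) ltac:(lra)).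
    rewrite Rabs_pos_eq by nra.
    assert (f (u + X) - f u - X * Derive f u = - X * (Derive f u - Derive f c)) by nra.
    rewrite H4.
    assert (Derive f u - Derive f (u + X) < e' * (- Derive f (u + X))) by nra.
    assert (- Derive f (u + X) <= 2 * - Derive f u) by nra.
    nra.
  - subst. exists 1. split. lra. intros u Hu. split. lra.
    rewrite Rplus_0_r. pose proof (SH_dneg f H u ltac:(lra)).
    replace (f u - f u - 0 * Derive f u) with 0 by ring. rewrite Rabs_R0. nra.
  - destruct (SH_R1 f H X (e / X) Hgt ltac:(apply Rdiv_lt_0_compat; lra)) as [M [HM HM2]].
    exists M. split. lra. intros u Hu. split. lra.
    specialize (HM2 u Hu).
    destruct (mvt f (Derive f) u (u + X) ltac:(lra)) as [c [Hc1 Hc2]].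
    { intros c Hc. apply is_derive_Reals. apply SH_der; auto; lra. }
    pose proof (SH_dincr f H u c ltac:(lra) ltac:(lra)).
    pose proof (SH_dincr f H c (u + X) ltac:(lra) ltac:(lra)).
    pose proof (SH_dneg f H u ltac:(lra)).
    replace (u + X - u) with X in Hc1 by ring.
    assert (f (u + X) - f u - X * Derive f u = X * (Derive f c - Derive f u)) by nra.
    rewrite H3. rewrite Rabs_pos_eq by nra.
    assert (X * (e / X) = e) by (field; lra).
    nra.
Qed.

Lemma SH_big f : strongly_hyperbolic f -> forall K, exists M, 0 < M /\ forall u, M < u ->
  K * (- Derive f u) < f u.
Proof.
  intros H K. set (L := 2 * Rabs K + 2).
  assert (HL : 0 < L) by (unfold L; pose proof (Rabs_pos K); lra).
  destruct (SH_R1 f H L (1/2) HL ltac:(lra)) as [M [HM HM2]].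
  exists M; split; auto. intros u Hu. specialize (HM2 u Hu).
  pose proof (tangent_strict f H (u + L) u ltac:(lra) ltac:(lra) ltac:(lra)).
  pose proof (SH_pos f H (u + L) ltac:(lra)).
  pose proof (SH_dneg f H u ltac:(lra)).
  replace (u - (u + L)) with (- L) in H0 by ring.
  assert (K <= Rabs K) by apply Rle_abs.
  assert (f u > L * (1/2) * - Derive f u) by nra.
  assert (K * - Derive f u <= Rabs K * - Derive f u) by (apply Rmult_le_compat_r; lra).
  replace (L * (1/2) * - Derive f u) with (Rabs K * - Derive f u + - Derive f u) in H4 by (unfold L; field).
  lra.
Qed.

Lemma SH_zero f : strongly_hyperbolic f -> forall e, 0 < e -> exists d, 0 < d /\ forall v, 0 < v < d ->
  f v < e * (- Derive f v) /\ 1 < e * (- Derive f v).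
Proof.
  intros H e He. set (w := e / 4).
  assert (Hw : 0 < w) by (unfold w; lra).
  destruct (SH_lim0 f H (Rmax (2 * f w) 1)) as [d0 [Hd0 Hd0']].
  exists (Rmin d0 w). split. apply Rmin_glb_lt; auto.
  intros v [Hv1 Hv2].
  pose proof (Rmin_l d0 w). pose proof (Rmin_r d0 w).
  specialize (Hd0' v ltac:(lra)).
  pose proof (Rmax_l (2 * f w) 1). pose proof (Rmax_r (2 * f w) 1).
  pose proof (tangent_strict f H v w Hv1 Hw ltac:(lra)).
  pose proof (SH_pos f H w Hw). pose proof (SH_dneg f H v Hv1).
  assert (A : f v < 2 * (w - v) * - Derive f v) by nra.
  assert (A2 : 2 * (w - v) * - Derive f v < e * - Derive f v).
  { apply Rmult_lt_compat_r; unfold w in *; lra. }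
  split; lra.
Qed.

Lemma SH_surj f : strongly_hyperbolic f -> forall y, 0 < y -> exists x, 0 < x /\ f x = y.
Proof.
  intros H y Hy.
  destruct (SH_lim0 f H y) as [d [Hd Hd']].
  destruct (SH_liminf f H y Hy) as [M [HM HM']].
  destruct (ivt_down f (d / 2) (M + d) y ltac:(lra)) as [c [Hc1 Hc2]].
  - intros x Hx. apply SH_cont; auto; lra.
  - apply Hd'; lra.
  - apply HM'; lra.
  - exists c; split; auto; lra.
Qed.

Definition hslope (f1 f2 : R -> R) a b x :=
  if Rlt_dec (- b) x then a * Derive f1 (x + b) else a * Derive f2 (- x - b).

Definition HT f1 f2 a b c x0 y0 m :=
  0 < a /\ x0 <> - b /\ fabc f1 f2 a b c x0 = y0 /\ hslope f1 f2 a b x0 = m.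

Lemma fabc_R f1 f2 a b c x : - b < x -> fabc f1 f2 a b c x = a * f1 (x + b) + c.
Proof. intros H. unfold fabc. destruct (Rlt_dec (- b) x); [reflexivity| lra]. Qed.
Lemma fabc_L f1 f2 a b c x : x < - b -> fabc f1 f2 a b c x = - a * f2 (- x - b) + c.
Proof. intros H. unfold fabc. destruct (Rlt_dec (- b) x); [lra| reflexivity]. Qed.
Lemma hslope_R f1 f2 a b x : - b < x -> hslope f1 f2 a b x = a * Derive f1 (x + b).
Proof. intros H. unfold hslope. destruct (Rlt_dec (- b) x); [reflexivity| lra]. Qed.
Lemma hslope_L f1 f2 a b x : x < - b -> hslope f1 f2 a b x = a * Derive f2 (- x - b).
Proof. intros H. unfold hslope. destruct (Rlt_dec (- b) x); [lra| reflexivity]. Qed.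

Lemma HT_neg f1 f2 a b c x0 y0 m : strongly_hyperbolic f1 -> strongly_hyperbolic f2 ->
  HT f1 f2 a b c x0 y0 m -> m < 0.
Proof.
  intros H1 H2 [Ha [Hb [_ Hm]]]. subst m.
  destruct (Rlt_or_le (- b) x0).
  - rewrite hslope_R by auto. pose proof (SH_dneg f1 H1 (x0 + b) ltac:(lra)). nra.
  - rewrite hslope_L by lra. pose proof (SH_dneg f2 H2 (- x0 - b) ltac:(lra)). nra.
Qed.

Lemma fin_HH f1 f2 a b c a' b' c' x0 y0 :
  b <> b' -> c <> c' -> fabc f1 f2 a b c x0 = y0 ->
  (forall x, x <> - b -> x <> - b' -> x <> x0 -> fabc f1 f2 a b c x <> fabc f1 f2 a' b' c' x) ->
  forall z, fbar f1 f2 a b c z -> fbar f1 f2 a' b' c' z -> z = (Some x0, Some y0).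
Proof.
  intros Hb Hc Hy Hx z Hz1 Hz2.
  destruct Hz1 as [[x [Hx1 ->]]|[->| ->]]; destruct Hz2 as [[x' [Hx1' E]]|[E|E]]; try discriminate.
  - injection E; intros E1 E2. subst x'.
    destruct (Req_dec x x0) as [->|Hne]. rewrite Hy; reflexivity.
    exfalso. apply (Hx x Hx1 Hx1' Hne). auto.
  - injection E; intros. exfalso; apply Hb; lra.
  - injection E; intros. exfalso; apply Hc; lra.
Qed.

Lemma mvt_pos (k k' : R -> R) a b : a < b ->
  (forall c, a <= c <= b -> is_derive k c (k' c)) -> (forall c, a < c < b -> 0 < k' c) -> k a < k b.
Proof.
  intros Hab Hd Hp. destruct (mvt k k' a b Hab Hd) as [c [E Hc]].
  specialize (Hp c Hc). nra.
Qed.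

Lemma mvt_neg (k k' : R -> R) a b : a < b ->
  (forall c, a <= c <= b -> is_derive k c (k' c)) -> (forall c, a < c < b -> k' c < 0) -> k b < k a.
Proof.
  intros Hab Hd Hp. destruct (mvt k k' a b Hab Hd) as [c [E Hc]].
  specialize (Hp c Hc). nra.
Qed.

(* tangent hyperbolas, both right branches at p *)
Lemma T_RR f1 f2 a b c a' b' c' x0 y0 m : strongly_hyperbolic f1 -> strongly_hyperbolic f2 ->
  HT f1 f2 a b c x0 y0 m -> HT f1 f2 a' b' c' x0 y0 m -> b < b' -> - b < x0 ->
  c' < c /\ forall x, x <> - b -> x <> - b' -> x <> x0 -> fabc f1 f2 a b c x <> fabc f1 f2 a' b' c' x.
Proof.
  intros H1 H2 [Ha [_ [Hy Hm]]] [Ha' [_ [Hy' Hm']]] Hbb Hx0.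
  rewrite fabc_R in Hy, Hy' by lra. rewrite hslope_R in Hm, Hm' by lra.
  set (u := x0 + b) in *. set (d := b' - b).
  assert (Hu : 0 < u) by (unfold u; lra). assert (Hd : 0 < d) by (unfold d; lra).
  assert (Eu' : x0 + b' = u + d) by (unfold u, d; ring). rewrite Eu' in Hy', Hm'.
  pose proof (SH_dneg f1 H1 u Hu) as Du. pose proof (SH_dneg f1 H1 (u + d) ltac:(lra)) as Dud.
  assert (Haa : a < a').
  { pose proof (SH_dincr f1 H1 u (u + d) Hu ltac:(lra)). nra. }
  set (k := fun x => a * f1 (x + b) - a' * f1 (x + b') + (c - c')).
  set (k' := fun x => a * Derive f1 (x + b) - a' * Derive f1 (x + b')).
  assert (Hk : forall x, - b < x -> is_derive k x (k' x)).
  { intros x Hx. unfold k, k'. auto_derive.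
    split. apply SH_ex_der; auto; lra. split; auto. apply SH_ex_der; auto; lra.
    change (fun x : R => f1 x) with f1. ring. }
  assert (Hk0 : k x0 = 0).
  { unfold k. fold u. rewrite Eu'. lra. }
  assert (Hkp : forall x, x0 < x -> 0 < k' x).
  { intros x Hx. unfold k'. set (t := x + b).
    replace (x + b') with (t + d) by (unfold t, d; ring).
    pose proof (SH_dshift f1 H1 u t d Hu ltac:(unfold t, u; lra) Hd) as S.
    pose proof (SH_dneg f1 H1 t ltac:(unfold t; lra)).
    pose proof (SH_dneg f1 H1 (t + d) ltac:(unfold t; lra)).
    assert (a * a' * (Derive f1 (u + d) * Derive f1 t) < a * a' * (Derive f1 u * Derive f1 (t + d))).
    { apply Rmult_lt_compat_l; auto. nra. }
    assert (m * (a * Derive f1 t) < m * (a' * Derive f1 (t + d))).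
    { replace (m * (a * Derive f1 t)) with (a * a' * (Derive f1 (u + d) * Derive f1 t)) by (rewrite <- Hm'; ring).
      replace (m * (a' * Derive f1 (t + d))) with (a * a' * (Derive f1 u * Derive f1 (t + d))) by (rewrite <- Hm; ring).
      auto. }
    assert (Hm0 : m < 0) by nra.
    nra. }
  assert (Hkn : forall x, - b < x -> x < x0 -> k' x < 0).
  { intros x Hx Hx2. unfold k'. set (t := x + b).
    replace (x + b') with (t + d) by (unfold t, d; ring).
    pose proof (SH_dshift f1 H1 t u d ltac:(unfold t; lra) ltac:(unfold t, u; lra) Hd) as S.
    pose proof (SH_dneg f1 H1 t ltac:(unfold t; lra)).
    pose proof (SH_dneg f1 H1 (t + d) ltac:(unfold t; lra)).
    assert (a * a' * (Derive f1 (t + d) * Derive f1 u) < a * a' * (Derive f1 t * Derive f1 (u + d))).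
    { apply Rmult_lt_compat_l; auto. nra. }
    assert (Hm0 : m < 0) by nra.
    assert (m * (a' * Derive f1 (t + d)) < m * (a * Derive f1 t)).
    { replace (m * (a' * Derive f1 (t + d))) with (a * a' * (Derive f1 (t + d) * Derive f1 u)) by (rewrite <- Hm; ring).
      replace (m * (a * Derive f1 t)) with (a * a' * (Derive f1 t * Derive f1 (u + d))) by (rewrite <- Hm'; ring).
      auto. }
    nra. }
  assert (Kpos : forall x, - b < x -> x <> x0 -> 0 < k x).
  { intros x Hx Hne. destruct (Rlt_or_le x x0) as [Hlt|Hle].
    - rewrite <- Hk0. apply (mvt_neg k k' x x0 Hlt).
      intros; apply Hk; lra. intros; apply Hkn; lra.
    - rewrite <- Hk0. apply (mvt_pos k k' x0 x ltac:(lra)).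
      intros; apply Hk; lra. intros; apply Hkp; lra. }
  assert (Hcc : c' < c).
  { apply Rnot_le_lt. intro Hc.
    pose proof (Kpos (x0 + 1) ltac:(lra) ltac:(lra)) as K1.
    destruct (SH_liminf f1 H1 (k (x0 + 1) / a) ltac:(apply Rdiv_lt_0_compat; lra)) as [M [HM HM2]].
    set (s := Rmax M (x0 + 1 + b) + 1).
    assert (Hs1 : M < s) by (unfold s; pose proof (Rmax_l M (x0 + 1 + b)); lra).
    assert (Hs2 : x0 + 1 + b < s) by (unfold s; pose proof (Rmax_r M (x0 + 1 + b)); lra).
    assert (Kl : k (x0 + 1) < k (s - b)).
    { apply (mvt_pos k k' (x0 + 1) (s - b) ltac:(unfold u in *; lra)).
      intros; apply Hk; lra. intros; apply Hkp; lra. }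
    specialize (HM2 s Hs1).
    assert (a * f1 s < k (x0 + 1)).
    { apply Rmult_lt_reg_r with (/ a). apply Rinv_0_lt_compat; lra.
      replace (a * f1 s * / a) with (f1 s) by (field; lra). exact HM2. }
    pose proof (SH_pos f1 H1 (s - b + b') ltac:(unfold u in *; lra)).
    unfold k in Kl. replace (s - b + b) with s in Kl by ring. assert (0 < a' * f1 (s - b + b')) by (apply Rmult_lt_0_compat; lra). unfold k in H. lra. }
  split; auto.
  intros x Hx1 Hx2 Hx3.
  destruct (Rtotal_order x (- b')) as [Hl|[He|Hg]]; [|lra|].
  - rewrite !fabc_L by lra.
    pose proof (SH_decr f2 H2 (- x - b') (- x - b) ltac:(lra) ltac:(lra)).
    pose proof (SH_pos f2 H2 (- x - b) ltac:(lra)). nra.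
  - destruct (Rtotal_order x (- b)) as [Hl2|[He2|Hg2]]; [|lra|].
    + rewrite fabc_L by lra. rewrite fabc_R by lra.
      pose proof (SH_decr f1 H1 (x + b') (u + d) ltac:(lra) ltac:(unfold u, d in *; lra)).
      pose proof (SH_pos f2 H2 (- x - b) ltac:(lra)).
      pose proof (SH_pos f1 H1 u Hu). nra.
    + rewrite !fabc_R by lra. pose proof (Kpos x Hg2 Hx3). unfold k in H. lra.
Qed.

Lemma T_LL f1 f2 a b c a' b' c' x0 y0 m : strongly_hyperbolic f1 -> strongly_hyperbolic f2 ->
  HT f1 f2 a b c x0 y0 m -> HT f1 f2 a' b' c' x0 y0 m -> b < b' -> x0 < - b' ->
  c' < c /\ forall x, x <> - b -> x <> - b' -> x <> x0 -> fabc f1 f2 a b c x <> fabc f1 f2 a' b' c' x.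
Proof.
  intros H1 H2 [Ha [_ [Hy Hm]]] [Ha' [_ [Hy' Hm']]] Hbb Hx0.
  rewrite fabc_L in Hy, Hy' by lra. rewrite hslope_L in Hm, Hm' by lra.
  set (v' := - x0 - b') in *. set (d := b' - b).
  assert (Hv : 0 < v') by (unfold v'; lra). assert (Hd : 0 < d) by (unfold d; lra).
  assert (Ev : - x0 - b = v' + d) by (unfold v', d; ring). rewrite Ev in Hy, Hm.
  pose proof (SH_dneg f2 H2 v' Hv) as Dv. pose proof (SH_dneg f2 H2 (v' + d) ltac:(lra)) as Dvd.
  assert (Haa : a' < a).
  { pose proof (SH_dincr f2 H2 v' (v' + d) Hv ltac:(lra)). nra. }
  assert (Hm0 : m < 0) by nra.
  set (k := fun x => - a * f2 (- x - b) + a' * f2 (- x - b') + (c - c')).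
  set (k' := fun x => a * Derive f2 (- x - b) - a' * Derive f2 (- x - b')).
  assert (Hk : forall x, x < - b' -> is_derive k x (k' x)).
  { intros x Hx. unfold k, k'. auto_derive.
    split. apply SH_ex_der; auto; lra. split; auto. apply SH_ex_der; auto; lra.
    change (fun x : R => f2 x) with f2. unfold Rminus; ring. }
  assert (Hk0 : k x0 = 0).
  { unfold k. fold v'. rewrite Ev. lra. }
  assert (Hkn : forall x, x < x0 -> k' x < 0).
  { intros x Hx. unfold k'. set (t := - x - b').
    replace (- x - b) with (t + d) by (unfold t, d; ring).
    pose proof (SH_dshift f2 H2 v' t d Hv ltac:(unfold t, v'; lra) Hd) as S.
    pose proof (SH_dneg f2 H2 t ltac:(unfold t, v' in *; lra)).
    pose proof (SH_dneg f2 H2 (t + d) ltac:(unfold t, v' in *; lra)).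
    assert (a * a' * (Derive f2 (v' + d) * Derive f2 t) < a * a' * (Derive f2 v' * Derive f2 (t + d))).
    { apply Rmult_lt_compat_l; auto. nra. }
    assert (m * (a' * Derive f2 t) < m * (a * Derive f2 (t + d))).
    { replace (m * (a' * Derive f2 t)) with (a * a' * (Derive f2 (v' + d) * Derive f2 t)) by (rewrite <- Hm; ring).
      replace (m * (a * Derive f2 (t + d))) with (a * a' * (Derive f2 v' * Derive f2 (t + d))) by (rewrite <- Hm'; ring).
      auto. }
    nra. }
  assert (Hkp : forall x, x0 < x -> x < - b' -> 0 < k' x).
  { intros x Hx Hx2. unfold k'. set (t := - x - b').
    replace (- x - b) with (t + d) by (unfold t, d; ring).
    pose proof (SH_dshift f2 H2 t v' d ltac:(unfold t; lra) ltac:(unfold t, v'; lra) Hd) as S.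
    pose proof (SH_dneg f2 H2 t ltac:(unfold t; lra)).
    pose proof (SH_dneg f2 H2 (t + d) ltac:(unfold t; lra)).
    assert (a * a' * (Derive f2 (t + d) * Derive f2 v') < a * a' * (Derive f2 t * Derive f2 (v' + d))).
    { apply Rmult_lt_compat_l; auto. nra. }
    assert (m * (a * Derive f2 (t + d)) < m * (a' * Derive f2 t)).
    { replace (m * (a * Derive f2 (t + d))) with (a * a' * (Derive f2 (t + d) * Derive f2 v')) by (rewrite <- Hm'; ring).
      replace (m * (a' * Derive f2 t)) with (a * a' * (Derive f2 t * Derive f2 (v' + d))) by (rewrite <- Hm; ring).
      auto. }
    nra. }
  assert (Kpos : forall x, x < - b' -> x <> x0 -> 0 < k x).
  { intros x Hx Hne. destruct (Rlt_or_le x x0) as [Hlt|Hle].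
    - rewrite <- Hk0. apply (mvt_neg k k' x x0 Hlt).
      intros; apply Hk; lra. intros; apply Hkn; lra.
    - rewrite <- Hk0. apply (mvt_pos k k' x0 x ltac:(lra)).
      intros; apply Hk; lra. intros; apply Hkp; lra. }
  assert (Hcc : c' < c).
  { apply Rnot_le_lt. intro Hc.
    pose proof (Kpos (x0 - 1) ltac:(lra) ltac:(lra)) as K1.
    destruct (SH_liminf f2 H2 (k (x0 - 1) / a') ltac:(apply Rdiv_lt_0_compat; lra)) as [M [HM HM2]].
    set (s := Rmax M (- x0 + 1 - b') + 1).
    assert (Hs1 : M < s) by (unfold s; pose proof (Rmax_l M (- x0 + 1 - b')); lra).
    assert (Hs2 : - x0 + 1 - b' < s) by (unfold s; pose proof (Rmax_r M (- x0 + 1 - b')); lra).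
    assert (Kl : k (x0 - 1) < k (- b' - s)).
    { apply (mvt_neg k k' (- b' - s) (x0 - 1) ltac:(lra)).
      intros; apply Hk; lra. intros; apply Hkn; lra. }
    specialize (HM2 s Hs1).
    assert (a' * f2 s < k (x0 - 1)).
    { apply Rmult_lt_reg_r with (/ a'). apply Rinv_0_lt_compat; lra.
      replace (a' * f2 s * / a') with (f2 s) by (field; lra). exact HM2. }
    assert (0 < - (- b' - s) - b) by (unfold d in *; lra).
    pose proof (SH_pos f2 H2 _ H0).
    assert (0 < a * f2 (- (- b' - s) - b)) by (apply Rmult_lt_0_compat; lra).
    unfold k in Kl, H. replace (- (- b' - s) - b') with s in Kl by ring. lra. }
  split; auto.
  intros x Hx1 Hx2 Hx3.
  destruct (Rtotal_order x (- b')) as [Hl|[He|Hg]]; [|lra|].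
  - pose proof (Kpos x Hl Hx3). unfold k in H. rewrite !fabc_L by lra. lra.
  - destruct (Rtotal_order x (- b)) as [Hl2|[He2|Hg2]]; [|lra|].
    + rewrite fabc_L by lra. rewrite fabc_R by lra.
      pose proof (SH_decr f2 H2 (- x - b) (v' + d) ltac:(lra) ltac:(unfold v', d in *; lra)).
      pose proof (SH_pos f1 H1 (x + b') ltac:(lra)).
      pose proof (SH_pos f2 H2 v' Hv). nra.
    + rewrite !fabc_R by lra.
      pose proof (SH_decr f1 H1 (x + b) (x + b') ltac:(lra) ltac:(lra)).
      pose proof (SH_pos f1 H1 (x + b') ltac:(lra)). nra.
Qed.

Lemma T_M f1 f2 a b c a' b' c' x0 y0 m : strongly_hyperbolic f1 -> strongly_hyperbolic f2 ->
  HT f1 f2 a b c x0 y0 m -> HT f1 f2 a' b' c' x0 y0 m -> - b' < x0 -> x0 < - b ->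
  c' < c /\ forall x, x <> - b -> x <> - b' -> x <> x0 -> fabc f1 f2 a b c x <> fabc f1 f2 a' b' c' x.
Proof.
  intros H1 H2 [Ha [_ [Hy Hm]]] [Ha' [_ [Hy' Hm']]] Hx1 Hx2.
  rewrite fabc_L in Hy by lra. rewrite hslope_L in Hm by lra.
  rewrite fabc_R in Hy' by lra. rewrite hslope_R in Hm' by lra.
  pose proof (SH_pos f2 H2 (- x0 - b) ltac:(lra)). pose proof (SH_pos f1 H1 (x0 + b') ltac:(lra)).
  assert (c' < c) by nra.
  split; auto.
  intros x Hne1 Hne2 Hne3.
  destruct (Rtotal_order x (- b')) as [Hl|[He|Hg]]; [|lra|].
  - rewrite !fabc_L by lra.
    pose proof (SH_decr f2 H2 (- x0 - b) (- x - b) ltac:(lra) ltac:(lra)).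
    pose proof (SH_pos f2 H2 (- x - b') ltac:(lra)). nra.
  - destruct (Rtotal_order x (- b)) as [Hl2|[He2|Hg2]]; [|lra|].
    + rewrite fabc_L by lra. rewrite fabc_R by lra.
      pose proof (tangent_strict f2 H2 (- x0 - b) (- x - b) ltac:(lra) ltac:(lra) ltac:(lra)).
      pose proof (tangent_strict f1 H1 (x0 + b') (x + b') ltac:(lra) ltac:(lra) ltac:(lra)).
      replace (- x - b - (- x0 - b)) with (x0 - x) in H3 by ring.
      replace (x + b' - (x0 + b')) with (x - x0) in H4 by ring.
      nra.
    + rewrite !fabc_R by lra.
      pose proof (SH_decr f1 H1 (x0 + b') (x + b') ltac:(lra) ltac:(lra)).
      pose proof (SH_pos f1 H1 (x + b) ltac:(lra)). nra.
Qed.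

Lemma T_HH_lt f1 f2 a b c a' b' c' x0 y0 m : strongly_hyperbolic f1 -> strongly_hyperbolic f2 ->
  HT f1 f2 a b c x0 y0 m -> HT f1 f2 a' b' c' x0 y0 m -> b < b' ->
  forall z, fbar f1 f2 a b c z -> fbar f1 f2 a' b' c' z -> z = (Some x0, Some y0).
Proof.
  intros H1 H2 HC HD Hbb.
  assert (X : c' < c /\ forall x, x <> - b -> x <> - b' -> x <> x0 -> fabc f1 f2 a b c x <> fabc f1 f2 a' b' c' x).
  { pose proof HC as [_ [Hb1 _]]. pose proof HD as [_ [Hb2 _]].
    destruct (Rtotal_order x0 (- b')) as [Hl|[He|Hg]]; [|lra|].
    - apply (T_LL f1 f2 a b c a' b' c' x0 y0 m); auto.
    - destruct (Rtotal_order x0 (- b)) as [Hl2|[He2|Hg2]]; [|lra|].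
      + apply (T_M f1 f2 a b c a' b' c' x0 y0 m); auto.
      + apply (T_RR f1 f2 a b c a' b' c' x0 y0 m); auto. }
  destruct X as [Hc Hx].
  apply fin_HH with (a := a) (b := b) (c := c) (a' := a') (b' := b') (c' := c'); auto; try lra.
  apply HC.
Qed.

Lemma T_HH f1 f2 a b c a' b' c' x0 y0 m : strongly_hyperbolic f1 -> strongly_hyperbolic f2 ->
  HT f1 f2 a b c x0 y0 m -> HT f1 f2 a' b' c' x0 y0 m -> b <> b' ->
  forall z, fbar f1 f2 a b c z -> fbar f1 f2 a' b' c' z -> z = (Some x0, Some y0).
Proof.
  intros H1 H2 HC HD Hbb z Hz1 Hz2.
  destruct (Rtotal_order b b') as [Hl|[He|Hg]]; [|lra|].
  - exact (T_HH_lt f1 f2 a b c a' b' c' x0 y0 m H1 H2 HC HD Hl z Hz1 Hz2).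
  - exact (T_HH_lt f1 f2 a' b' c' a b c x0 y0 m H1 H2 HD HC Hg z Hz2 Hz1).
Qed.

Lemma T_HH_eq f1 f2 a b c a' c' x0 y0 m : strongly_hyperbolic f1 -> strongly_hyperbolic f2 ->
  HT f1 f2 a b c x0 y0 m -> HT f1 f2 a' b c' x0 y0 m -> a = a' /\ c = c'.
Proof.
  intros H1 H2 [Ha [Hb [Hy Hm]]] [Ha' [_ [Hy' Hm']]].
  destruct (Rtotal_order x0 (- b)) as [Hl|[He|Hg]]; [|lra|].
  - rewrite fabc_L in Hy, Hy' by lra. rewrite hslope_L in Hm, Hm' by lra.
    pose proof (SH_dneg f2 H2 (- x0 - b) ltac:(lra)).
    assert (a = a').
    { apply Rmult_eq_reg_r with (Derive f2 (- x0 - b)); lra. }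
    subst; split; lra.
  - rewrite fabc_R in Hy, Hy' by lra. rewrite hslope_R in Hm, Hm' by lra.
    pose proof (SH_dneg f1 H1 (x0 + b) ltac:(lra)).
    assert (a = a').
    { apply Rmult_eq_reg_r with (Derive f1 (x0 + b)); lra. }
    subst; split; lra.
Qed.

Lemma T_HL f1 f2 a b c x0 y0 m : strongly_hyperbolic f1 -> strongly_hyperbolic f2 ->
  HT f1 f2 a b c x0 y0 m ->
  forall z, fbar f1 f2 a b c z -> lbar m (y0 - m * x0) z -> z = (Some x0, Some y0).
Proof.
  intros H1 H2 HC z Hz1 Hz2.
  pose proof (HT_neg _ _ _ _ _ _ _ _ H1 H2 HC) as Hm0.
  destruct HC as [Ha [Hb [Hy Hm]]].
  destruct Hz1 as [[x [Hx1 ->]]|[->| ->]]; destruct Hz2 as [[x' E]|E]; try discriminate.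
  injection E; intros E1 E2. subst x'.
  destruct (Req_dec x x0) as [->|Hne]. rewrite Hy; reflexivity.
  exfalso. revert E1.
  destruct (Rtotal_order x0 (- b)) as [Hl|[He|Hg]]; [|lra|].
  - rewrite fabc_L in Hy by lra. rewrite hslope_L in Hm by lra.
    destruct (Rtotal_order x (- b)) as [Hl2|[He2|Hg2]]; [|lra|].
    + rewrite fabc_L by lra.
      pose proof (tangent_strict f2 H2 (- x0 - b) (- x - b) ltac:(lra) ltac:(lra) ltac:(lra)).
      replace (- x - b - (- x0 - b)) with (x0 - x) in H by ring. nra.
    + rewrite fabc_R by lra.
      pose proof (SH_pos f1 H1 (x + b) ltac:(lra)). pose proof (SH_pos f2 H2 (- x0 - b) ltac:(lra)).
      nra.
  - rewrite fabc_R in Hy by lra. rewrite hslope_R in Hm by lra.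
    destruct (Rtotal_order x (- b)) as [Hl2|[He2|Hg2]]; [|lra|].
    + rewrite fabc_L by lra.
      pose proof (SH_pos f2 H2 (- x - b) ltac:(lra)). pose proof (SH_pos f1 H1 (x0 + b) ltac:(lra)).
      nra.
    + rewrite fabc_R by lra.
      pose proof (tangent_strict f1 H1 (x0 + b) (x + b) ltac:(lra) ltac:(lra) ltac:(lra)).
      replace (x + b - (x0 + b)) with (x - x0) in H by ring. nra.
Qed.

Lemma dn_lt n d Y : d < 0 -> Y * d < n -> n / d < Y.
Proof.
  intros Hd H. apply Rmult_lt_reg_r with (- d). lra.
  replace (n / d * - d) with (- n) by (field; lra). lra.
Qed.
Lemma dn_gt n d Y : d < 0 -> n < Y * d -> Y < n / d.
Proof.
  intros Hd H. apply Rmult_lt_reg_r with (- d). lra.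
  replace (n / d * - d) with (- n) by (field; lra). lra.
Qed.

Lemma ivt2 (phi : R -> R) Y al be :
  (forall x, Rmin al be <= x <= Rmax al be -> continuity_pt phi x) ->
  phi al < Y -> Y < phi be -> exists c, Rmin al be <= c <= Rmax al be /\ phi c = Y.
Proof.
  intros Hc H1 H2.
  destruct (Rtotal_order al be) as [Hl|[He|Hg]].
  - rewrite Rmin_left, Rmax_right in * by lra. apply ivt_up; auto.
  - subst; lra.
  - rewrite Rmin_right, Rmax_left in * by lra. apply ivt_down; auto.
Qed.

Lemma between_lo al be c lo : lo < al -> lo < be -> Rmin al be <= c -> lo < c.
Proof. intros. unfold Rmin in H1. destruct (Rle_dec al be); lra. Qed.
Lemma between_hi al be c hi : al < hi -> be < hi -> c <= Rmax al be -> c < hi.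
Proof. intros. unfold Rmax in H1. destruct (Rle_dec al be); lra. Qed.

(* the quadrant X > 0, Y > 0 : left family, v in (0, X) *)
Lemma Q1 f1 f2 m X Y : strongly_hyperbolic f1 -> strongly_hyperbolic f2 -> m < 0 -> 0 < X -> 0 < Y ->
  exists v, 0 < v /\ v < X /\ m * (f1 (X - v) + f2 v) / Derive f2 v = Y.
Proof.
  intros H1 H2 Hm HX HY.
  set (B := f1 (X / 2)). assert (HB : 0 < B) by (apply SH_pos; auto; lra).
  set (eps := Y / (2 * (- m) * (B + 1))).
  assert (He : 0 < eps) by (unfold eps; apply Rdiv_lt_0_compat; nra).
  assert (He2 : (- m) * eps * (B + 1) = Y / 2) by (unfold eps; field; lra).
  destruct (SH_zero f2 H2 eps He) as [d [Hd Hd2]].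
  set (al := Rmin d (X / 2) / 2).
  assert (Hal : 0 < al /\ al < d /\ al < X / 2).
  { unfold al. pose proof (Rmin_l d (X/2)). pose proof (Rmin_r d (X/2)).
    assert (0 < Rmin d (X / 2)) by (apply Rmin_glb_lt; lra). lra. }
  destruct (Hd2 al ltac:(lra)) as [Z1 Z2].
  pose proof (SH_dneg f2 H2 al ltac:(lra)) as Dal.
  assert (Fal : f1 (X - al) < B) by (apply SH_decr; auto; lra).
  assert (V1 : m * (f1 (X - al) + f2 al) / Derive f2 al < Y).
  { apply dn_lt; auto. pose proof (SH_pos f2 H2 al ltac:(lra)).
    pose proof (SH_pos f1 H1 (X - al) ltac:(lra)).
    assert (- m * (f1 (X - al) + f2 al) < - m * (B * (eps * - Derive f2 al) + eps * - Derive f2 al)).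
    { apply Rmult_lt_compat_l. lra. nra. }
    assert (- m * (B * (eps * - Derive f2 al) + eps * - Derive f2 al) = Y / 2 * - Derive f2 al).
    { rewrite <- He2. ring. }
    nra. }
  set (K := Y * Derive f2 al / m).
  destruct (SH_lim0 f1 H1 K) as [d1 [Hd1 Hd1']].
  set (be := X - Rmin d1 (X - al) / 2).
  assert (Hbe : al < be /\ be < X /\ X - be < d1).
  { unfold be. pose proof (Rmin_l d1 (X - al)). pose proof (Rmin_r d1 (X - al)).
    assert (0 < Rmin d1 (X - al)) by (apply Rmin_glb_lt; lra). lra. }
  assert (V2 : Y < m * (f1 (X - be) + f2 be) / Derive f2 be).
  { apply dn_gt. apply SH_dneg; auto; lra.
    specialize (Hd1' (X - be) ltac:(lra)).
    pose proof (SH_pos f2 H2 be ltac:(lra)).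
    pose proof (SH_dincr f2 H2 al be ltac:(lra) ltac:(lra)).
    assert (m * f1 (X - be) < m * K) by (apply Rmult_lt_gt_compat_neg_l; lra).
    assert (m * K = Y * Derive f2 al) by (unfold K; field; lra).
    nra. }
  destruct (ivt2 (fun v => m * (f1 (X - v) + f2 v) / Derive f2 v) Y al be) as [c [Hc1 Hc2]]; auto.
  - intros x Hx. pose proof (between_lo al be x 0 ltac:(lra) ltac:(lra) ltac:(apply Hx)).
    pose proof (between_hi al be x X ltac:(lra) ltac:(lra) ltac:(apply Hx)).
    apply cp_div. apply cp_mult. apply cp_const. apply cp_plus.
    apply cp_comp. apply cp_minus; [apply cp_const| apply cp_id]. apply SH_cont; auto; lra.
    apply SH_cont; auto; lra. apply SH_dcont; auto; lra.
    pose proof (SH_dneg f2 H2 x ltac:(lra)); lra.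
  - exists c. pose proof (between_lo al be c 0 ltac:(lra) ltac:(lra) ltac:(apply Hc1)).
    pose proof (between_hi al be c X ltac:(lra) ltac:(lra) ltac:(apply Hc1)). auto.
Qed.

Lemma far_lt f m X Y : strongly_hyperbolic f -> m < 0 -> m * X < Y ->
  exists M, 0 < M /\ forall u, M < u -> 0 < X + u /\ m * (f (X + u) - f u) / Derive f u < Y.
Proof.
  intros H Hm HY.
  set (eps := (Y - m * X) / (2 * - m)).
  assert (He : 0 < eps) by (unfold eps; apply Rdiv_lt_0_compat; lra).
  assert (He2 : - m * eps = (Y - m * X) / 2) by (unfold eps; field; lra).
  destruct (SH_asym f H X eps He) as [M [HM HM2]].
  exists M. split; auto. intros u Hu. destruct (HM2 u Hu) as [Hp Ha].
  split. lra. rewrite Rplus_comm.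
  pose proof (SH_dneg f H u ltac:(lra)).
  apply Rabs_lt_between in Ha.
  apply dn_lt; auto.
  assert (m * (f (u + X) - f u - X * Derive f u) > - m * eps * Derive f u) by nra.
  rewrite He2 in H1. nra.
Qed.

Lemma Q2a f m X Y : strongly_hyperbolic f -> m < 0 -> X < 0 -> m * X < Y ->
  exists u, - X < u /\ m * (f (X + u) - f u) / Derive f u = Y.
Proof.
  intros H Hm HX HY.
  assert (HY0 : 0 < Y) by nra.
  pose proof (SH_dneg f H (- X) ltac:(lra)) as D0.
  set (K := f (- X) + Y * Derive f (- X) / m).
  destruct (SH_lim0 f H K) as [d [Hd Hd']].
  set (al := - X + Rmin d 1 / 2).
  assert (Hal : - X < al /\ al + X < d /\ al < - X + 1).
  { unfold al. pose proof (Rmin_l d 1). pose proof (Rmin_r d 1).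
    assert (0 < Rmin d 1) by (apply Rmin_glb_lt; lra). lra. }
  assert (V1 : Y < m * (f (X + al) - f al) / Derive f al).
  { apply dn_gt. apply SH_dneg; auto; lra.
    specialize (Hd' (X + al) ltac:(lra)).
    pose proof (SH_decr f H (- X) al ltac:(lra) ltac:(lra)).
    pose proof (SH_dincr f H (- X) al ltac:(lra) ltac:(lra)).
    assert (m * f (X + al) < m * K) by (apply Rmult_lt_gt_compat_neg_l; lra).
    assert (m * K = m * f (- X) + Y * Derive f (- X)) by (unfold K; field; lra).
    nra. }
  destruct (far_lt f m X Y H Hm HY) as [M [HM HM2]].
  set (be := Rmax M al + 1).
  assert (Hbe : M < be /\ al < be) by (unfold be; pose proof (Rmax_l M al); pose proof (Rmax_r M al); lra).
  destruct (HM2 be ltac:(lra)) as [_ V2].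
  destruct (ivt2 (fun u => m * (f (X + u) - f u) / Derive f u) Y be al) as [c [Hc1 Hc2]]; auto.
  - intros x Hx. pose proof (between_lo be al x (- X) ltac:(lra) ltac:(lra) ltac:(apply Hx)).
    apply cp_div. apply cp_mult. apply cp_const. apply cp_minus.
    apply cp_comp. apply cp_plus; [apply cp_const| apply cp_id]. apply SH_cont; auto; lra.
    apply SH_cont; auto; lra. apply SH_dcont; auto; lra.
    pose proof (SH_dneg f H x ltac:(lra)); lra.
  - exists c. pose proof (between_lo be al c (- X) ltac:(lra) ltac:(lra) ltac:(apply Hc1)). auto.
Qed.

Lemma Q4b f m X Y : strongly_hyperbolic f -> m < 0 -> 0 < X -> m * X < Y -> Y < 0 ->
  exists u, 0 < u /\ m * (f (X + u) - f u) / Derive f u = Y.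
Proof.
  intros H Hm HX HY HY0.
  set (eps := Y / m / 2).
  assert (He : 0 < eps) by (unfold eps; apply Rmult_lt_0_compat; [apply Rdiv_neg_neg; lra| lra]).
  assert (He2 : - m * eps = - Y / 2) by (unfold eps; field; lra).
  destruct (SH_zero f H eps He) as [d [Hd Hd']].
  set (al := d / 2).
  destruct (Hd' al ltac:(unfold al; lra)) as [Z1 _].
  assert (V1 : Y < m * (f (X + al) - f al) / Derive f al).
  { apply dn_gt. apply SH_dneg; auto; unfold al; lra.
    pose proof (SH_pos f H (X + al) ltac:(unfold al; lra)).
    pose proof (SH_dneg f H al ltac:(unfold al; lra)).
    assert (- m * f al < - m * (eps * - Derive f al)) by (apply Rmult_lt_compat_l; lra).
    assert (- m * (eps * - Derive f al) = - Y / 2 * - Derive f al) by (rewrite <- He2; ring).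
    nra. }
  destruct (far_lt f m X Y H Hm HY) as [M [HM HM2]].
  set (be := Rmax M al + 1).
  assert (Hbe : M < be /\ al < be) by (unfold be; pose proof (Rmax_l M al); pose proof (Rmax_r M al); lra).
  destruct (HM2 be ltac:(lra)) as [_ V2].
  destruct (ivt2 (fun u => m * (f (X + u) - f u) / Derive f u) Y be al) as [c [Hc1 Hc2]]; auto.
  - intros x Hx. pose proof (between_lo be al x 0 ltac:(unfold al in *; lra) ltac:(unfold al; lra) ltac:(apply Hx)).
    apply cp_div. apply cp_mult. apply cp_const. apply cp_minus.
    apply cp_comp. apply cp_plus; [apply cp_const| apply cp_id]. apply SH_cont; auto; lra.
    apply SH_cont; auto; lra. apply SH_dcont; auto; lra.
    pose proof (SH_dneg f H x ltac:(lra)); lra.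
  - exists c. pose proof (between_lo be al c 0 ltac:(unfold al in *; lra) ltac:(unfold al; lra) ltac:(apply Hc1)). auto.
Qed.

Lemma ratio_surj f K : strongly_hyperbolic f -> K < 0 -> exists u, 0 < u /\ f u / Derive f u = K.
Proof.
  intros H HK.
  destruct (SH_zero f H (- K / 2) ltac:(lra)) as [d [Hd Hd']].
  set (al := d / 2).
  destruct (Hd' al ltac:(unfold al; lra)) as [Z1 _].
  assert (V1 : K < f al / Derive f al).
  { apply dn_gt. apply SH_dneg; auto; unfold al; lra.
    pose proof (SH_dneg f H al ltac:(unfold al; lra)). nra. }
  destruct (SH_big f H (- K)) as [M [HM HM2]].
  set (be := Rmax M al + 1).
  assert (Hbe : M < be /\ al < be) by (unfold be; pose proof (Rmax_l M al); pose proof (Rmax_r M al); lra).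
  assert (V2 : f be / Derive f be < K).
  { apply dn_lt. apply SH_dneg; auto; unfold al in *; lra.
    specialize (HM2 be ltac:(lra)). lra. }
  destruct (ivt2 (fun u => f u / Derive f u) K be al) as [c [Hc1 Hc2]]; auto.
  - intros x Hx. pose proof (between_lo be al x 0 ltac:(unfold al in *; lra) ltac:(unfold al; lra) ltac:(apply Hx)).
    apply cp_div. apply SH_cont; auto. apply SH_dcont; auto.
    pose proof (SH_dneg f H x ltac:(lra)); lra.
  - exists c. pose proof (between_lo be al c 0 ltac:(unfold al in *; lra) ltac:(unfold al; lra) ltac:(apply Hc1)). auto.
Qed.

Lemma RF_HT f1 f2 x0 y0 m u : strongly_hyperbolic f1 -> m < 0 -> 0 < u ->
  HT f1 f2 (m / Derive f1 u) (u - x0) (y0 - m / Derive f1 u * f1 u) x0 y0 m.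
Proof.
  intros H1 Hm Hu. pose proof (SH_dneg f1 H1 u Hu).
  split. apply Rdiv_neg_neg; auto. split. lra.
  split. rewrite fabc_R by lra. replace (x0 + (u - x0)) with u by ring. ring.
  rewrite hslope_R by lra. replace (x0 + (u - x0)) with u by ring. field; lra.
Qed.

Lemma LF_HT f1 f2 x0 y0 m v : strongly_hyperbolic f2 -> m < 0 -> 0 < v ->
  HT f1 f2 (m / Derive f2 v) (- x0 - v) (y0 + m / Derive f2 v * f2 v) x0 y0 m.
Proof.
  intros H2 Hm Hv. pose proof (SH_dneg f2 H2 v Hv).
  split. apply Rdiv_neg_neg; auto. split. lra.
  split. rewrite fabc_L by lra. replace (- x0 - (- x0 - v)) with v by ring. ring.
  rewrite hslope_L by lra. replace (- x0 - (- x0 - v)) with v by ring. field; lra.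
Qed.

Lemma exist_touch f1 f2 x0 y0 m q : strongly_hyperbolic f1 -> strongly_hyperbolic f2 -> m < 0 ->
  ~ parallel (Some x0, Some y0) q ->
  (exists a b c, HT f1 f2 a b c x0 y0 m /\ fbar f1 f2 a b c q) \/ lbar m (y0 - m * x0) q.
Proof.
  intros H1 H2 Hm Hpar. unfold parallel in Hpar. simpl in Hpar.
  destruct q as [[x1|] [y1|]]; simpl in Hpar.
  - assert (Hx : x1 <> x0) by (intro; subst; apply Hpar; auto).
    assert (Hy : y1 <> y0) by (intro; subst; apply Hpar; auto).
    set (X := x1 - x0). set (Y := y1 - y0).
    assert (HX : X <> 0) by (unfold X; lra). assert (HY : Y <> 0) by (unfold Y; lra).
    assert (RFc : forall u, 0 < u -> 0 < X + u -> m * (f1 (X + u) - f1 u) / Derive f1 u = Y ->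
       (exists a b c, HT f1 f2 a b c x0 y0 m /\ fbar f1 f2 a b c (Some x1, Some y1))).
    { intros u Hu HXu E. pose proof (SH_dneg f1 H1 u Hu).
      do 3 eexists. split. apply (RF_HT f1 f2 x0 y0 m u H1 Hm Hu).
      left. exists x1. split. unfold X in *; lra. do 2 f_equal.
      rewrite fabc_R by (unfold X in *; lra). replace (x1 + (u - x0)) with (X + u) by (unfold X; ring).
      assert (y1 = y0 + m * (f1 (X + u) - f1 u) / Derive f1 u) by (rewrite E; unfold Y; ring).
      rewrite H0. field. lra. }
    assert (RFc2 : forall u, 0 < u -> X + u < 0 -> m * (f2 (- X - u) + f1 u) / Derive f1 u = - Y ->
       (exists a b c, HT f1 f2 a b c x0 y0 m /\ fbar f1 f2 a b c (Some x1, Some y1))).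
    { intros u Hu HXu E. pose proof (SH_dneg f1 H1 u Hu).
      do 3 eexists. split. apply (RF_HT f1 f2 x0 y0 m u H1 Hm Hu).
      left. exists x1. split. unfold X in *; lra. do 2 f_equal.
      rewrite fabc_L by (unfold X in *; lra). replace (- x1 - (u - x0)) with (- X - u) by (unfold X; ring).
      assert (y1 = y0 - m * (f2 (- X - u) + f1 u) / Derive f1 u) by (rewrite E; unfold Y; ring).
      rewrite H0. field. lra. }
    assert (LFc : forall v, 0 < v -> 0 < X - v -> m * (f1 (X - v) + f2 v) / Derive f2 v = Y ->
       (exists a b c, HT f1 f2 a b c x0 y0 m /\ fbar f1 f2 a b c (Some x1, Some y1))).
    { intros v Hv HXv E. pose proof (SH_dneg f2 H2 v Hv).
      do 3 eexists. split. apply (LF_HT f1 f2 x0 y0 m v H2 Hm Hv).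
      left. exists x1. split. unfold X in *; lra. do 2 f_equal.
      rewrite fabc_R by (unfold X in *; lra). replace (x1 + (- x0 - v)) with (X - v) by (unfold X; ring).
      assert (y1 = y0 + m * (f1 (X - v) + f2 v) / Derive f2 v) by (rewrite E; unfold Y; ring).
      rewrite H0. field. lra. }
    assert (LFc2 : forall v, 0 < v -> X - v < 0 -> m * (f2 (- X + v) - f2 v) / Derive f2 v = - Y ->
       (exists a b c, HT f1 f2 a b c x0 y0 m /\ fbar f1 f2 a b c (Some x1, Some y1))).
    { intros v Hv HXv E. pose proof (SH_dneg f2 H2 v Hv).
      do 3 eexists. split. apply (LF_HT f1 f2 x0 y0 m v H2 Hm Hv).
      left. exists x1. split. unfold X in *; lra. do 2 f_equal.
      rewrite fabc_L by (unfold X in *; lra). replace (- x1 - (- x0 - v)) with (- X + v) by (unfold X; ring).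
      assert (y1 = y0 - m * (f2 (- X + v) - f2 v) / Derive f2 v) by (rewrite E; unfold Y; ring).
      rewrite H0. field. lra. }
    destruct (Rtotal_order X 0) as [HXn|[HX0|HXp]]; [|lra|];
    destruct (Rtotal_order Y 0) as [HYn|[HY0|HYp]]; try lra.
    +
      destruct (Q1 f2 f1 m (- X) (- Y) H2 H1 Hm ltac:(lra) ltac:(lra)) as [v [Hv1 [Hv2 E]]].
      left. apply (RFc2 v); auto; lra.
    +
      destruct (Rtotal_order Y (m * X)) as [Hl|[He|Hg]].
      * destruct (Q4b f2 m (- X) (- Y) H2 Hm ltac:(lra) ltac:(lra) ltac:(lra)) as [v [Hv E]].
        left. apply (LFc2 v); auto; lra.
      * right. left. exists x1. do 2 f_equal. unfold X, Y in He. lra.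
      * destruct (Q2a f1 m X Y H1 Hm HXn Hg) as [u [Hu E]].
        left. apply (RFc u); auto; lra.
    +
      destruct (Rtotal_order Y (m * X)) as [Hl|[He|Hg]].
      * destruct (Q2a f2 m (- X) (- Y) H2 Hm ltac:(lra) ltac:(lra)) as [v [Hv E]].
        left. apply (LFc2 v); auto; lra.
      * right. left. exists x1. do 2 f_equal. unfold X, Y in He. lra.
      * destruct (Q4b f1 m X Y H1 Hm HXp Hg HYn) as [u [Hu E]].
        left. apply (RFc u); auto; lra.
    +
      destruct (Q1 f1 f2 m X Y H1 H2 Hm HXp HYp) as [v [Hv1 [Hv2 E]]].
      left. apply (LFc v); auto; lra.
  - assert (Hx : x1 <> x0) by (intro; subst; apply Hpar; auto).
    left. destruct (Rtotal_order x1 x0) as [Hl|[He|Hg]]; [|lra|].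
    + do 3 eexists. split. apply (RF_HT f1 f2 x0 y0 m (x0 - x1) H1 Hm ltac:(lra)).
      right; left. do 2 f_equal. ring.
    + do 3 eexists. split. apply (LF_HT f1 f2 x0 y0 m (x1 - x0) H2 Hm ltac:(lra)).
      right; left. do 2 f_equal. ring.
  - assert (Hy : y1 <> y0) by (intro; subst; apply Hpar; auto).
    left. destruct (Rtotal_order y1 y0) as [Hl|[He|Hg]]; [|lra|].
    + destruct (ratio_surj f1 ((y0 - y1) / m) H1 ltac:(apply Rdiv_pos_neg; lra)) as [u [Hu E]].
      pose proof (SH_dneg f1 H1 u Hu).
      do 3 eexists. split. apply (RF_HT f1 f2 x0 y0 m u H1 Hm Hu).
      right; right. do 2 f_equal.
      assert (m / Derive f1 u * f1 u = m * (f1 u / Derive f1 u)) by (field; lra).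
      rewrite H0, E. field. lra.
    + destruct (ratio_surj f2 ((y1 - y0) / m) H2 ltac:(apply Rdiv_pos_neg; lra)) as [v [Hv E]].
      pose proof (SH_dneg f2 H2 v Hv).
      do 3 eexists. split. apply (LF_HT f1 f2 x0 y0 m v H2 Hm Hv).
      right; right. do 2 f_equal.
      assert (m / Derive f2 v * f2 v = m * (f2 v / Derive f2 v)) by (field; lra).
      rewrite H0, E. field. lra.
  - right. right. reflexivity.
Qed.

Lemma fabc_shift f1 f2 a b c c' x : fabc f1 f2 a b c' x = fabc f1 f2 a b c x - c + c'.
Proof. unfold fabc. destruct (Rlt_dec (- b) x); ring. Qed.

Lemma inter_c f1 f2 a b c c' : c <> c' ->
  forall z, fbar f1 f2 a b c z -> fbar f1 f2 a b c' z -> z = (Some (- b), None).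
Proof.
  intros Hc z Hz1 Hz2.
  destruct Hz1 as [[x [Hx1 ->]]|[->| ->]]; destruct Hz2 as [[x' [Hx1' E]]|[E|E]]; try discriminate; auto.
  - injection E; intros E1 E2. subst x'. rewrite (fabc_shift f1 f2 a b c c' x) in E1. lra.
  - injection E; intros. lra.
Qed.

Lemma inter_b f1 f2 a b b' c : strongly_hyperbolic f1 -> strongly_hyperbolic f2 -> 0 < a -> b <> b' ->
  forall z, fbar f1 f2 a b c z -> fbar f1 f2 a b' c z -> z = (None, Some c).
Proof.
  intros H1 H2 Ha Hb z Hz1 Hz2.
  destruct Hz1 as [[x [Hx1 ->]]|[->| ->]]; destruct Hz2 as [[x' [Hx1' E]]|[E|E]]; try discriminate; auto.
  - injection E; intros E1 E2. subst x'. exfalso. revert E1.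
    assert (Hr : forall b1 b2, - b1 < x -> - b2 < x -> b1 < b2 -> a * f1 (x + b1) + c <> a * f1 (x + b2) + c).
    { intros b1 b2 h1 h2 h3. pose proof (SH_decr f1 H1 (x + b1) (x + b2) ltac:(lra) ltac:(lra)). nra. }
    assert (Hl : forall b1 b2, x < - b1 -> x < - b2 -> b1 < b2 -> - a * f2 (- x - b1) + c <> - a * f2 (- x - b2) + c).
    { intros b1 b2 h1 h2 h3. pose proof (SH_decr f2 H2 (- x - b2) (- x - b1) ltac:(lra) ltac:(lra)). nra. }
    destruct (Rtotal_order x (- b)) as [l1|[e1|g1]]; [|lra|];
    destruct (Rtotal_order x (- b')) as [l2|[e2|g2]]; try lra.
    + rewrite !fabc_L by lra. destruct (Rtotal_order b b') as [o|[o|o]]; [|lra|].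
      apply Hl; auto. intro E0; symmetry in E0; revert E0; apply Hl; auto.
    + rewrite fabc_L by lra. rewrite fabc_R by lra.
      pose proof (SH_pos f2 H2 (- x - b) ltac:(lra)). pose proof (SH_pos f1 H1 (x + b') ltac:(lra)). nra.
    + rewrite fabc_R by lra. rewrite fabc_L by lra.
      pose proof (SH_pos f1 H1 (x + b) ltac:(lra)). pose proof (SH_pos f2 H2 (- x - b') ltac:(lra)). nra.
    + rewrite !fabc_R by lra. destruct (Rtotal_order b b') as [o|[o|o]]; [|lra|].
      apply Hr; auto. intro E0; symmetry in E0; revert E0; apply Hr; auto.
  - injection E; intros. lra.
Qed.

Theorem theorem4p13 (f1 f2 : R -> R) :
  strongly_hyperbolic f1 -> strongly_hyperbolic f2 ->
  forall (C : P -> Prop) (p q : P),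
    in_Cminus f1 f2 C -> C p -> ~ C q -> ~ parallel p q ->
    exists D : P -> Prop,
      in_Cminus f1 f2 D /\ D p /\ D q /\
      (forall z : P, (C z /\ D z) <-> z = p).
Proof.
  intros H1 H2 C p q HC Cp nCq npar.
  destruct HC as [[a [b [c [Ha HCe]]]] | [s [t [Hs HCe]]]]; subst C.
  -
    destruct Cp as [[x0 [Hx0 Hp]] | [Hp | Hp]]; subst p.
    + set (y0 := fabc f1 f2 a b c x0). set (m := hslope f1 f2 a b x0).
      assert (HTC : HT f1 f2 a b c x0 y0 m) by (repeat split; auto).
      pose proof (HT_neg _ _ _ _ _ _ _ _ H1 H2 HTC) as Hm.
      destruct (exist_touch f1 f2 x0 y0 m q H1 H2 Hm npar) as [[a' [b' [c' [HTD Dq]]]] | Lq].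
      * exists (fbar f1 f2 a' b' c').
        assert (Dp : fbar f1 f2 a' b' c' (Some x0, Some y0)).
        { left. exists x0. destruct HTD as [_ [Hb' [Hy' _]]]. split; auto. rewrite Hy'; reflexivity. }
        split. left. exists a', b', c'. split; [apply HTD| reflexivity].
        split; auto. split; auto.
        intros z; split.
        -- intros [Cz Dz]. destruct (Req_dec b b') as [Eb|Nb].
           ++ subst b'. destruct (T_HH_eq f1 f2 a b c a' c' x0 y0 m H1 H2 HTC HTD) as [Ea Ec].
              subst a' c'. exfalso; apply nCq; exact Dq.
           ++ exact (T_HH f1 f2 a b c a' b' c' x0 y0 m H1 H2 HTC HTD Nb z Cz Dz).
        -- intros ->. split; auto. left. exists x0. split; auto.
      * exists (lbar m (y0 - m * x0)).
        assert (Dp : lbar m (y0 - m * x0) (Some x0, Some y0)).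
        { left. exists x0. do 2 f_equal. ring. }
        split. right. exists m, (y0 - m * x0). split; auto.
        split; auto. split; auto.
        intros z; split.
        -- intros [Cz Dz]. exact (T_HL f1 f2 a b c x0 y0 m H1 H2 HTC z Cz Dz).
        -- intros ->. split; auto. left. exists x0. split; auto.
    +
      destruct q as [qx qy]. unfold parallel in npar; simpl in npar.
      destruct qy as [y1|]; [| exfalso; apply npar; auto].
      assert (Hex : exists c', c' <> c /\ fbar f1 f2 a b c' (qx, Some y1)).
      { destruct qx as [x1|].
        - assert (Hx1 : x1 <> - b) by (intro; subst; apply npar; auto).
          exists (y1 - (fabc f1 f2 a b c x1 - c)). split.
          + intro E. apply nCq. left. exists x1. split; auto. do 2 f_equal. lra.
          + left. exists x1. split; auto. do 2 f_equal. rewrite (fabc_shift f1 f2 a b c). ring.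
        - exists y1. split.
          + intro E. subst. apply nCq. right; right; reflexivity.
          + right; right; reflexivity. }
      destruct Hex as [c' [Hc' Dq]].
      exists (fbar f1 f2 a b c'). split. left. exists a, b, c'. split; auto.
      split. right; left; reflexivity. split; auto.
      intros z; split.
      * intros [Cz Dz]. exact (inter_c f1 f2 a b c c' ltac:(auto) z Cz Dz).
      * intros ->. split; right; left; reflexivity.
    +
      destruct q as [qx qy]. unfold parallel in npar; simpl in npar.
      destruct qx as [x1|]; [| exfalso; apply npar; auto].
      assert (Hex : exists b', b' <> b /\ fbar f1 f2 a b' c (Some x1, qy)).
      { destruct qy as [y1|].
        - assert (Hy1 : y1 <> c) by (intro; subst; apply npar; auto).
          assert (Hb : exists b', fbar f1 f2 a b' c (Some x1, Some y1)).
          { destruct (Rtotal_order y1 c) as [l|[e|g]]; [|lra|].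
            - destruct (SH_surj f2 H2 ((c - y1) / a) ltac:(apply Rdiv_lt_0_compat; lra)) as [t [Ht Et]].
              exists (- x1 - t). left. exists x1. split. lra. do 2 f_equal.
              rewrite fabc_L by lra. replace (- x1 - (- x1 - t)) with t by ring. rewrite Et. field. lra.
            - destruct (SH_surj f1 H1 ((y1 - c) / a) ltac:(apply Rdiv_lt_0_compat; lra)) as [t [Ht Et]].
              exists (t - x1). left. exists x1. split. lra. do 2 f_equal.
              rewrite fabc_R by lra. replace (x1 + (t - x1)) with t by ring. rewrite Et. field. lra. }
          destruct Hb as [b' Hb']. exists b'. split; auto.
          intro E; subst. apply nCq; auto.
        - assert (Hx1 : x1 <> - b) by (intro; subst; apply nCq; right; left; reflexivity).
          exists (- x1). split. intro E. apply Hx1. lra.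
          right; left. do 2 f_equal. ring. }
      destruct Hex as [b' [Hb' Dq]].
      exists (fbar f1 f2 a b' c). split. left. exists a, b', c. split; auto.
      split. right; right; reflexivity. split; auto.
      intros z; split.
      * intros [Cz Dz]. exact (inter_b f1 f2 a b b' c H1 H2 Ha ltac:(auto) z Cz Dz).
      * intros ->. split; right; right; reflexivity.
  -
    destruct Cp as [[x0 Hp] | Hp]; subst p.
    + set (y0 := s * x0 + t).
      assert (Ht : t = y0 - s * x0) by (unfold y0; ring).
      destruct (exist_touch f1 f2 x0 y0 s q H1 H2 Hs npar) as [[a' [b' [c' [HTD Dq]]]] | Lq].
      * exists (fbar f1 f2 a' b' c').
        assert (Dp : fbar f1 f2 a' b' c' (Some x0, Some y0)).
        { left. exists x0. destruct HTD as [_ [Hb' [Hy' _]]]. split; auto. rewrite Hy'; reflexivity. }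
        split. left. exists a', b', c'. split; [apply HTD| reflexivity].
        split; auto. split; auto.
        intros z; split.
        -- intros [Cz Dz]. rewrite Ht in Cz. exact (T_HL f1 f2 a' b' c' x0 y0 s H1 H2 HTD z Dz Cz).
        -- intros ->. split; auto. left. exists x0. reflexivity.
      * exfalso. apply nCq. rewrite Ht. exact Lq.
    + destruct q as [[x1|] [y1|]]; unfold parallel in npar; simpl in npar;
        try (exfalso; apply npar; auto; fail).
      exists (lbar s (y1 - s * x1)).
      assert (Ht : t <> y1 - s * x1).
      { intro E. apply nCq. left. exists x1. do 2 f_equal. lra. }
      split. right. exists s, (y1 - s * x1). split; auto.
      split. right; reflexivity. split. left. exists x1. do 2 f_equal. ring.
      intros z; split.
      * intros [Cz Dz].
        destruct Cz as [[x Ex]|Ex]; destruct Dz as [[x' Ex']|Ex']; subst z; try discriminate; auto.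
        injection Ex'; intros. subst x'. exfalso; apply Ht. lra.
      * intros ->. split; right; reflexivity.
Qed.
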